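(* For every infinite set $X$ there exists a generic metric space of cardinality $\#X$. Specifically: fix a well-order $\le$ on $X$; let $G_o$ be the oriented graph on $X$ with an edge $(x,y)$ whenever $x<y$; let $H_o$ be obtained by replacing each oriented edge $e=(x,y)$ of $G_o$ with three new vertices $u_e,v_e,w_e$ and the four oriented edges $(x,u_e),(u_e,v_e),(v_e,y),(v_e,w_e)$; let $H=(V_H,E_H)$ be the underlying non-oriented graph. Then $H$ has trivial automorphism group, $\#V_H=\#X$, and for any $\varepsilon\in(0,1)$ the metric on $V_H$ with distance $1$ between distinct adjacent vertices and $1+\varepsilon$ between distinct non-adjacent vertices is a generic metric space with $s(V_H)=1$, $t(V_H)=1-\varepsilon$ and $e(V_H)=\varepsilon$.
   Context: For a metric space $M$ with $\#M\ge3$: $s(M)=\inf\{|xx'|: x\ne x'\}$; $t(M)=\inf\{|xx'|+|x'x''|-|xx''|: x,x',x''\text{ pairwise distinct}\}$; $e(M)=\inf\{\operatorname{dis}f: f\colon M\to M \text{ bijective}, f\ne\mathrm{id}\}$, where $\operatorname{dis}f=\sup_{x,x'}||xx'|-|f(x)f(x')||$. $M$ is called generic if $\#M\ge3$ and $s(M),t(M),e(M)$ are all positive. *)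

(* Defs.v *)
From HB Require Import structures.
From mathcomp Require Import all_boot all_order all_algebra.
From mathcomp Require Import all_classical all_reals.
From mathcomp Require Import ereal.
Set Implicit Arguments. Unset Strict Implicit. Unset Printing Implicit Defensive.
Import Order.TTheory GRing.Theory Num.Theory.
Local Open Scope ring_scope.
Local Open Scope classical_set_scope.

Definition is_metric (R : realType) (M : Type) (d : M -> M -> R) : Prop :=
  (forall x y, d x y = 0 <-> x = y) /\
  (forall x y, d x y = d y x) /\
  (forall x y z, d x z <= d x y + d y z).

Definition card_ge3 (M : Type) : Prop :=
  exists x y z : M, [/\ x <> y, y <> z & x <> z].

Definition s_inv (R : realType) (M : Type) (d : M -> M -> R) : \bar R :=
  ereal_inf [set r | exists x x' : M, x <> x' /\ r = (d x x')%:E].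

Definition t_inv (R : realType) (M : Type) (d : M -> M -> R) : \bar R :=
  ereal_inf [set r | exists x x' x'' : M,
     [/\ x <> x', x' <> x'', x <> x''
       & r = (d x x' + d x' x'' - d x x'')%:E]].

Definition dis (R : realType) (M : Type) (d : M -> M -> R) (f : M -> M) : \bar R :=
  ereal_sup [set r | exists x x' : M, r = (`|d x x' - d (f x) (f x')|)%:E].

Definition e_inv (R : realType) (M : Type) (d : M -> M -> R) : \bar R :=
  ereal_inf [set r | exists f : M -> M, [/\ bijective f, f <> id & r = dis d f]].

Definition generic (R : realType) (M : Type) (d : M -> M -> R) : Prop :=
  [/\ card_ge3 M, (0 < s_inv d)%E, (0 < t_inv d)%E & (0 < e_inv d)%E].

Definition well_order (X : Type) (lt : X -> X -> Prop) : Prop :=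
  [/\ (forall x, ~ lt x x),
      (forall x y z, lt x y -> lt y z -> lt x z),
      (forall x y, x = y \/ lt x y \/ lt y x)
    & well_founded lt].

Definition edgeG (X : Type) (lt : X -> X -> Prop) := {p : X * X | lt p.1 p.2}.

Inductive tag3 := TU | TV | TW.

(* vertex set V_H: the old vertices X plus u_e, v_e, w_e for each edge e *)
Definition VH (X : Type) (lt : X -> X -> Prop) : Type := (X + edgeG lt * tag3)%type.

Definition adjHo (X : Type) (lt : X -> X -> Prop) (a b : VH lt) : Prop :=
  match a, b with
  | inl x, inr (e, TU) => x = (proj1_sig e).1
  | inr (e, TU), inr (e', TV) => e = e'
  | inr (e, TV), inl y => y = (proj1_sig e).2
  | inr (e, TV), inr (e', TW) => e = e'
  | _, _ => False
  end.

Definition adjH (X : Type) (lt : X -> X -> Prop) (a b : VH lt) : Prop :=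
  adjHo a b \/ adjHo b a.

Definition trivial_aut (X : Type) (lt : X -> X -> Prop) : Prop :=
  forall f : VH lt -> VH lt, bijective f ->
    (forall a b, adjH a b <-> adjH (f a) (f b)) -> f = id.

Definition dH (R : realType) (X : Type) (lt : X -> X -> Prop) (eps : R)
    (a b : VH lt) : R :=
  if `[< a = b >] then 0 else if `[< adjH a b >] then 1 else 1 + eps.
Arguments dH {R X} lt eps a b.

(* Main.v *)
Require Import Defs.
From HB Require Import structures.
From mathcomp Require Import all_boot all_order all_algebra.
From mathcomp Require Import all_classical all_reals.
From mathcomp Require Import ereal.
From mathcomp Require Import lra.
From mathcomp Require wochoice.
Import Order.TTheory GRing.Theory Num.Theory.
Set Implicit Arguments. Unset Strict Implicit. Unset Printing Implicit Defensive.

Local Open Scope classical_set_scope.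
Local Open Scope card_scope.

Lemma le_funP {T} {U : pointedType} (A : set T) (B : set U) :
  A #<= B <-> exists2 f : T -> U, set_fun A B f & set_inj A f.
Proof. by split => [/pcard_leP/injfunPex // | /injfunPex H]; apply/pcard_leP. Qed.

Lemma graph_le {T} {U : pointedType} (A : set T) (B : set U) (H : T -> U -> Prop) :
  (forall a b, A a -> H a b -> B b) ->
  (forall a a' b, A a -> A a' -> H a b -> H a' b -> a = a') ->
  (forall a, A a -> exists b, H a b) -> A #<= B.
Proof.
move=> HB Hinj Htot.
have : forall a, exists b, A a -> H a b.
  move=> a; case: (pselect (A a)) => Aa; last by exists point.
  by have [b Hb] := Htot a Aa; exists b.
move=> /choice [f Hf]; apply/le_funP; exists f.
  by move=> a Aa; apply: (HB a); last exact: Hf.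
move=> x y /set_mem Ax /set_mem Ay Exy; apply: (Hinj x y (f x)) => //; first exact: Hf.
by rewrite Exy; apply: Hf.
Qed.

Lemma card_total {T U : pointedType} (A : set T) (B : set U) : A #<= B \/ B #<= A.
Proof.
pose P (H : set (T * U)) := [/\ (forall a b, H (a,b) -> A a /\ B b),
   (forall a b b', H (a,b) -> H (a,b') -> b = b') &
   (forall a a' b, H (a,b) -> H (a',b) -> a = a')].
have [H [[HAB Hf Hi] Hmax]] : exists H, P H /\ forall B', H `<` B' -> ~ P B'.
  apply: Zorn_bigcup => F FP Ftot; split.
  - move=> a b [X FX Xab]. have := FP X FX. rewrite /P. case. move=> + _ _. apply. exact Xab.
  - move=> a b b' [X FX Xab] [Y FY Yab].
    have [XY|YX] := Ftot X Y FX FY.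
      by case: (FP Y FY) => _ HY _; exact: HY (XY _ Xab) Yab.
    by case: (FP X FX) => _ HX _; exact: HX Xab (YX _ Yab).
  - move=> a a' b [X FX Xab] [Y FY Yab].
    have [XY|YX] := Ftot X Y FX FY.
      by case: (FP Y FY) => _ _ HY; exact: HY (XY _ Xab) Yab.
    by case: (FP X FX) => _ _ HX; exact: HX Xab (YX _ Yab).
case: (pselect (forall a, A a -> exists b, H (a,b))) => [tot|ntot].
  left; apply: (graph_le (H := fun a b => H (a,b))).
  - by move=> a b _ /HAB[].
  - by move=> a a' b _ _; apply: Hi.
  - exact: tot.
case: (pselect (forall b, B b -> exists a, H (a,b))) => [tot|ntot'].
  right; apply: (graph_le (H := fun b a => H (a,b))).
  - by move=> b a _ /HAB[].
  - by move=> b b' a _ _; apply: Hf.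
  - exact: tot.
exfalso.
have [a Aa] : exists2 a, A a & forall b, ~ H (a,b).
  apply: contra_notP ntot => nex a Aa; apply: contra_notP nex => nb.
  by exists a => // b Hab; apply: nb; exists b.
have [b Bb] : exists2 b, B b & forall a, ~ H (a,b).
  apply: contra_notP ntot' => nex b Bb; apply: contra_notP nex => nb.
  by exists b => // a' Hab; apply: nb; exists a'.
move=> nHb nHa.
apply: (Hmax (H `|` [set (a,b)])).
  split; first by move=> q Hq; left.
  by move=> /(_ (a,b) (or_intror erefl)); apply: nHa.
split.
- by move=> x y [/HAB//|[-> ->]].
- move=> x y y' [Hxy|[E1 E2]] [Hxy'|[E3 E4]]; first exact: Hf Hxy Hxy'.
  + by exfalso; apply: (nHa y); rewrite -E3.
  + by exfalso; apply: (nHa y'); rewrite -E1.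
  + by rewrite E2 E4.
- move=> x x' y [Hxy|[E1 E2]] [Hxy'|[E3 E4]]; first exact: Hi Hxy Hxy'.
  + by exfalso; apply: (nHb x); rewrite -E4.
  + by exfalso; apply: (nHb x'); rewrite -E2.
  + by rewrite E1 E3.
Qed.

Local Open Scope classical_set_scope.
Local Open Scope card_scope.

Definition supp T (G : set ((T*T)*T)) a := exists b c, G ((a,b),c).
Definition isG T (G : set ((T*T)*T)) :=
 [/\ (forall a b c, G((a,b),c) -> supp G b /\ supp G c),
  (forall a b, supp G a -> supp G b -> exists c, G((a,b),c)),
  (forall c, supp G c -> exists p, G(p,c)),
  (forall p c c', G(p,c) -> G(p,c') -> c = c') &
  (forall p p' c, G(p,c) -> G(p',c) -> p = p')].

Lemma isG_le (T : pointedType) (G : set ((T*T)*T)) : isG G ->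
  exists2 g : T * T -> T, set_fun (supp G `*` supp G) (supp G) g &
     set_inj (supp G `*` supp G) g.
Proof.
case=> G1 G2 G3 G4 G5; apply/le_funP.
apply: (graph_le (H := fun p c => G (p,c))).
- by case=> a b c _ /G1 [].
- by move=> p p' c _ _; apply: G5.
- by case=> a b [/= Sa Sb]; apply: G2.
Qed.

Lemma hess (T : pointedType) : infinite_set [set: T] ->
  exists f : T * T -> T, injective f.
Proof.
move=> Tinf.
have [iota iota_inj] : exists iota : nat -> T, injective iota.
  have /pcard_injP [f finj] := iffLR (infiniteP _) Tinf.
  by exists f => x y E; apply: finj => //; apply/mem_set.
have [pi [_ pi_inj pi_surj]] : exists pi : nat * nat -> nat, set_bij setT setT pi.
  exact/card_set_bijP/card_nat2.
pose G0 : set ((T*T)*T) := fun q => exists m n, q = ((iota m, iota n), iota (pi (m,n))).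
have suppG0 a : supp G0 a <-> exists m, a = iota m.
  split; first by move=> [b [c [m [n [-> _ _]]]]]; exists m.
  by move=> [m ->]; exists (iota 0), (iota (pi (m,0%N))), m, 0%N.
have isG0 : isG G0.
  split.
  - move=> a b c [m [n [_ -> ->]]]; split; first by apply/suppG0; exists n.
    by apply/suppG0; exists (pi (m,n)).
  - move=> a b /suppG0[m ->] /suppG0[n ->]; exists (iota (pi (m,n))); by exists m, n.
  - move=> c /suppG0[k ->]; have [[m n] _ E] := pi_surj k I.
    by exists (iota m, iota n); exists m, n; rewrite E.
  - move=> p c c' [m [n [-> ->]]] [m' [n' [[/iota_inj E1 /iota_inj E2] ->]]].
    by rewrite E1 E2.
  - move=> p p' c [m [n [-> ->]]] [m' [n' [-> /iota_inj E]]].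
    have := pi_inj (m,n) (m',n') (mem_set I) (mem_set I) E.
    by case=> -> ->.
pose P (G : set ((T*T)*T)) := G = set0 \/ (G0 `<=` G /\ isG G).
have [G [PG Gmax]] : exists G, P G /\ forall B, G `<` B -> ~ P B.
  apply: Zorn_bigcup => F FP Ftot.
  case: (pselect (exists2 X, F X & X !=set0)) => [[X1 FX1 [q1 X1q1]]|allE]; last first.
    left; apply/seteqP; split => // q [X FX Xq]; apply: allE; exists X => //.
    by exists q.
  have FG X : F X -> X !=set0 -> G0 `<=` X /\ isG X.
    move=> FX [q Xq]; case: (FP X FX) => // X0; by rewrite X0 in Xq.
  have mem2 X Y : F X -> F Y -> exists2 Z, F Z & X `<=` Z /\ Y `<=` Z.
    move=> FX FY; have [XY|YX] := Ftot X Y FX FY.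
      by exists Y => //; split.
    by exists X => //; split.
  have GZ Z q : F Z -> Z q -> G0 `<=` Z /\ isG Z.
    by move=> FZ Zq; apply: FG => //; exists q.
  pose U := \bigcup_(X in F) X.
  have suppU a : supp U a -> exists2 Z, F Z & supp Z a.
    by move=> [b [c [Z FZ Zq]]]; exists Z => //; exists b, c.
  have suppZ Z a : F Z -> supp Z a -> supp U a.
    by move=> FZ [b [c Zq]]; exists b, c, Z.
  right; split.
    move=> q G0q; exists X1 => //.
    by have [+ _] := FG X1 FX1 (ex_intro _ q1 X1q1); apply.
  split.
  - move=> a b c [Z FZ Zq]; have [_ [Z1 _ _ _ _]] := GZ Z _ FZ Zq.
    by have [? ?] := Z1 a b c Zq; split; apply: (suppZ Z).
  - move=> a b /suppU[Z1 FZ1 S1] /suppU[Z2 FZ2 S2].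
    have [Z FZ [sub1 sub2]] := mem2 Z1 Z2 FZ1 FZ2.
    have [b' [c' Zq]] : supp Z a.
      by case: S1 => b' [c' q]; exists b', c'; apply: sub1.
    have [_ [_ Z2' _ _ _]] := GZ Z _ FZ Zq.
    have [c Zc] : exists c, Z ((a,b),c).
      apply: Z2'; first by exists b', c'.
      by case: S2 => b'' [c'' q]; exists b'', c''; apply: sub2.
    by exists c, Z.
  - move=> c /suppU[Z FZ [b [c' Zq]]].
    have [_ [_ _ Z3 _ _]] := GZ Z _ FZ Zq.
    have [p Zp] := Z3 c (ex_intro _ b (ex_intro _ c' Zq)).
    by exists p, Z.
  - move=> p c c' [Z1 FZ1 Z1q] [Z2 FZ2 Z2q].
    have [Z FZ [sub1 sub2]] := mem2 Z1 Z2 FZ1 FZ2.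
    have [_ [_ _ _ Z4 _]] := GZ Z _ FZ (sub1 _ Z1q).
    exact: Z4 (sub1 _ Z1q) (sub2 _ Z2q).
  - move=> p p' c [Z1 FZ1 Z1q] [Z2 FZ2 Z2q].
    have [Z FZ [sub1 sub2]] := mem2 Z1 Z2 FZ1 FZ2.
    have [_ [_ _ _ _ Z5]] := GZ Z _ FZ (sub1 _ Z1q).
    exact: Z5 (sub1 _ Z1q) (sub2 _ Z2q).
have G0ne : G0 (iota 0, iota 0, iota (pi (0%N,0%N))) by exists 0%N, 0%N.
have [G0G isGG] : G0 `<=` G /\ isG G.
  case: PG => // G0E; exfalso; apply: (Gmax G0); last by right; split.
  rewrite G0E; split => //; move/(_ _ G0ne) => //.
pose A := supp G.
have Aiota k : A (iota k).
  have : supp G0 (iota k) by apply/suppG0; exists k.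
  by case=> b [c q]; exists b, c; apply: G0G.
have [g gfun ginj] := isG_le isGG.
have gA x y : A x -> A y -> A (g (x,y)) by move=> Ax Ay; apply: gfun.
have gI x y x' y' : A x -> A y -> A x' -> A y' -> g (x,y) = g (x',y') -> x = x' /\ y = y'.
  move=> Ax Ay Ax' Ay' E.
  by have [] := ginj (x,y) (x',y') (mem_set (conj Ax Ay)) (mem_set (conj Ax' Ay')) E.
have i01 : iota 0 <> iota 1 by move=> /iota_inj.
case: (card_total (~` A) A) => /le_funP [h hfun hinj].
  pose F x := if pselect (A x) then g (x, iota 0) else g (h x, iota 1).
  have hA x : ~ A x -> A (h x) by apply: hfun.
  have FA x : A (F x).
    by rewrite /F; case: pselect => Ax; apply: gA => //; apply: hfun.
  have Finj : injective F.
    move=> x y; rewrite /F; case: pselect => Ax; case: pselect => Ay.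
    - by move=> /= /gI[]; auto using Aiota.
    - by move=> /= /gI[]; auto using Aiota, hA => _ /i01.
    - by move=> /= /gI[]; auto using Aiota, hA => _ /esym/i01.
    - move=> /= /gI[]; auto using Aiota, hA => E _.
      by apply: hinj => //; apply/mem_set.
  exists (fun p => g (F p.1, F p.2)) => [[x y] [x' y']] /= /gI[] //.
  by move=> /Finj -> /Finj ->.
exfalso.
pose C := h @` A.
have disj x : A x -> C x -> False.
  by move=> Ax [a Aa E]; have := hfun a Aa; rewrite E.
have /choice[hinv hinvP] : forall c, exists a, C c -> A a /\ h a = c.
  move=> c; case: (pselect (C c)) => [[a Aa E]|nC]; last by exists point.
  by exists a.
pose s x := if pselect (A x) then g (x, iota 0) else g (hinv x, iota 1).
have sA x : A x \/ C x -> A (s x).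
  rewrite /s; case: pselect => Ax [Ax'|Cx] //; apply: gA => //; by case: (hinvP x Cx).
have sI x y : A x \/ C x -> A y \/ C y -> s x = s y -> x = y.
  move=> Hx Hy; rewrite /s; case: pselect => Ax; case: pselect => Ay.
  - by move=> /gI[]; auto using Aiota.
  - case: Hy => // Cy; have [? _] := hinvP y Cy.
    by move=> /gI[]; auto using Aiota => _ /i01.
  - case: Hx => // Cx; have [? _] := hinvP x Cx.
    by move=> /gI[]; auto using Aiota => _ /esym/i01.
  - case: Hx => // Cx; case: Hy => // Cy.
    have [? hx] := hinvP x Cx; have [? hy] := hinvP y Cy.
    by move=> /gI[]; auto using Aiota => E _; rewrite -hx -hy E.
pose D : set (T * T) := fun p => (A p.1 /\ C p.2) \/ (C p.1 /\ A p.2) \/ (C p.1 /\ C p.2).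
have DAC p : D p -> (A p.1 \/ C p.1) /\ (A p.2 \/ C p.2).
  by case=> [[? ?]|[[? ?]|[? ?]]]; split; auto.
have [k [kfun kinj ksurj]] : exists k, set_bij D C k.
  apply/card_set_bijP; rewrite card_eq_le; apply/andP; split; apply/le_funP.
  - exists (fun p => h (g (s p.1, s p.2))).
      move=> p /DAC [H1 H2]; exists (g (s p.1, s p.2)) => //.
      by apply: gA; apply: sA.
    move=> [x y] [x' y'] /set_mem /DAC [/= H1 H2] /set_mem /DAC [/= H1' H2'] E.
    have : g (s x, s y) = g (s x', s y').
      by apply: hinj => //; apply/mem_set; apply: gA; apply: sA.
    move=> /gI [] //; try by apply: sA.
    by move=> E1 E2; rewrite (sI _ _ H1 H1' E1) (sI _ _ H2 H2' E2).
  - exists (fun c => (c,c)); first by move=> c Cc; right; right.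
    by move=> x y _ _ [].
have kC p : D p -> C (k p) by apply: kfun.
case: isGG => G1 G2 G3 G4 G5.
pose G' : set ((T*T)*T) := fun q => G q \/ (D q.1 /\ q.2 = k q.1).
have suppG'E x : supp G' x <-> A x \/ C x.
  split.
  - move=> [b [c [Gq|[Dq _]]]]; first by left; exists b, c.
    by have [] := DAC _ Dq.
  - case=> [[b [c Gq]]|Cx]; first by exists b, c; left.
    by exists x, (k (x,x)); right; split => //; right; right.
have GA a b c : G ((a,b),c) -> [/\ A a, A b & A c].
  by move=> Gq; have [? ?] := G1 _ _ _ Gq; split => //; exists b, c.
have isG' : isG G'.
  split.
  - move=> a b c [Gq|[/= Dq ->]].
      by have [_ ? ?] := GA _ _ _ Gq; split; apply/suppG'E; left.
    split; apply/suppG'E; last by right; apply: kC.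
    by have [_] := DAC _ Dq.
  - move=> a b /suppG'E Ha /suppG'E Hb.
    case: (pselect (A a /\ A b)) => [[Aa Ab]|nAB].
      by have [c Gc] := G2 a b Aa Ab; exists c; left.
    exists (k (a,b)); right; split => //=.
    by move: Ha Hb nAB; rewrite /D /=; tauto.
  - move=> c /suppG'E [Ac|Cc].
      by have [p Gp] := G3 c Ac; exists p; left.
    by have [p Dp kp] := ksurj c Cc; exists p; right; rewrite kp.
  - move=> [a b] c c' [Gq|[/= Dq ->]] [Gq'|[/= Dq' ->]] //.
    + exact: G4 Gq Gq'.
    + exfalso; have [Aa Ab _] := GA _ _ _ Gq.
      by move: Dq'; rewrite /D /=; move: (disj a) (disj b); tauto.
    + exfalso; have [Aa Ab _] := GA _ _ _ Gq'.
      by move: Dq; rewrite /D /=; move: (disj a) (disj b); tauto.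
  - move=> [a b] [a' b'] c [Gq|[/= Dq E]] [Gq'|[/= Dq' E']].
    + exact: G5 Gq Gq'.
    + by exfalso; have [_ _ Ac] := GA _ _ _ Gq; apply: (disj c Ac); rewrite E'; apply: kC.
    + by exfalso; have [_ _ Ac] := GA _ _ _ Gq'; apply: (disj c Ac); rewrite E; apply: kC.
    + by apply: kinj; [apply/mem_set|apply/mem_set|rewrite -E -E'].
have Ch : C (h (iota 0)) by exists (iota 0).
apply: (Gmax G').
  split; first by move=> q Gq; left.
  move=> /(_ ((h (iota 0), h (iota 0)), k (h (iota 0), h (iota 0)))).
  have : G' ((h (iota 0), h (iota 0)), k (h (iota 0), h (iota 0))).
    by right; split => //; right; right; split.
  move=> Hq /(_ Hq) /GA [Ah _ _].
  exact: disj Ah Ch.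
right; split => //.
by move=> q /G0G Gq; left.
Qed.

Local Open Scope classical_set_scope.

Lemma nbr_w X (lt : X -> X -> Prop) e (m : VH lt) :
  adjH (inr (e,TW)) m -> m = inr (e,TV).
Proof. by case: m => [y|[e' []]]; rewrite /adjH /= => -[] // ->. Qed.

Lemma nbr_u X (lt : X -> X -> Prop) e (m : VH lt) :
  adjH (inr (e,TU)) m -> m = inl (sval e).1 \/ m = inr (e,TV).
Proof. by case: m => [y|[e' []]]; rewrite /adjH /= => -[] // ->; auto. Qed.

Lemma nbr_v X (lt : X -> X -> Prop) e (m : VH lt) :
  adjH (inr (e,TV)) m -> [\/ m = inr (e,TU), m = inl (sval e).2 | m = inr (e,TW)].
Proof.
case: m => [y|[e' []]]; rewrite /adjH /= => -[] // ->.
- by constructor 2.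
- by constructor 1.
- by constructor 3.
Qed.

Lemma nbr_x X (lt : X -> X -> Prop) x (m : VH lt) :
  adjH (inl x) m -> exists e, (m = inr (e,TU) /\ (sval e).1 = x) \/
                              (m = inr (e,TV) /\ (sval e).2 = x).
Proof.
case: m => [y|[e' []]]; rewrite /adjH /= => -[] //.
- by move=> ->; exists e'; left.
- by move=> ->; exists e'; right.
Qed.

Lemma adj_sym X (lt : X -> X -> Prop) (a b : VH lt) : adjH a b -> adjH b a.
Proof. by rewrite /adjH => -[]; auto. Qed.

Lemma adj_uv X (lt : X -> X -> Prop) e : adjH (inr (e,TU) : VH lt) (inr (e,TV)).
Proof. by left. Qed.
Lemma adj_vw X (lt : X -> X -> Prop) e : adjH (inr (e,TV) : VH lt) (inr (e,TW)).
Proof. by left. Qed.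
Lemma adj_xu X (lt : X -> X -> Prop) e : adjH (inl (sval e).1 : VH lt) (inr (e,TU)).
Proof. by left. Qed.
Lemma adj_vy X (lt : X -> X -> Prop) e : adjH (inr (e,TV) : VH lt) (inl (sval e).2).
Proof. by left. Qed.

Definition leaf X (lt : X -> X -> Prop) (a : VH lt) :=
  exists n, adjH a n /\ forall m, adjH a m -> m = n.

Lemma two_nleaf X (lt : X -> X -> Prop) (a b c : VH lt) :
  adjH a b -> adjH a c -> b <> c -> ~ leaf a.
Proof. by move=> ab ac bc [n [_ H]]; apply: bc; rewrite (H _ ab) (H _ ac). Qed.

Lemma leaf_w X (lt : X -> X -> Prop) e : leaf (inr (e,TW) : VH lt).
Proof. by exists (inr (e,TV)); split; [apply: adj_sym; apply: adj_vw | apply: nbr_w]. Qed.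

Lemma nleaf_u X (lt : X -> X -> Prop) e : ~ leaf (inr (e,TU) : VH lt).
Proof. by apply: (two_nleaf (adj_sym (adj_xu e)) (adj_uv e)). Qed.

Lemma nleaf_v X (lt : X -> X -> Prop) e : ~ leaf (inr (e,TV) : VH lt).
Proof. by apply: (two_nleaf (adj_sym (adj_uv e)) (adj_vw e)). Qed.

Lemma nb X (lt : X -> X -> Prop) : well_order lt -> forall x y, x <> y ->
  exists e t, adjH (inl x : VH lt) (inr (e,t)) /\ (sval e = (x,y) \/ sval e = (y,x)).
Proof.
case=> _ _ tri _ x y xy; case: (tri x y) => [//|[xy'|yx]].
- exists (exist _ (x,y) xy'), TU; split; last by left.
  exact: (adj_xu (exist (fun p => lt p.1 p.2) (x,y) xy')).
- exists (exist _ (y,x) yx), TV; split; last by right.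
  exact: (adj_sym (adj_vy (exist (fun p => lt p.1 p.2) (y,x) yx))).
Qed.

Lemma nb_inj X (lt : X -> X -> Prop) x w1 w2 (e1 e2 : edgeG lt) t1 t2 :
  x <> w1 -> (sval e1 = (x,w1) \/ sval e1 = (w1,x)) ->
  (sval e2 = (x,w2) \/ sval e2 = (w2,x)) ->
  (inr (e1,t1) : VH lt) = inr (e2,t2) -> w1 = w2.
Proof.
move=> xw1 p1 p2 [E _].
have : sval e1 = sval e2 by rewrite E.
case: p1 => ->; case: p2 => -> [] //.
- by move=> E1 E2; exfalso; apply: xw1; rewrite E2.
- by move=> E1 E2; exfalso; apply: xw1; rewrite E1.
Qed.

Lemma three_others X (iota : nat -> X) : injective iota -> forall x,
  exists w1 w2 w3 : X, [/\ x <> w1, x <> w2, x <> w3 & [/\ w1 <> w2, w2 <> w3 & w1 <> w3]].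
Proof.
move=> ii x.
have D i j : i <> j -> iota i <> iota j by move=> ij /ii.
case: (pselect (x = iota 0)) => [->|x0].
  by exists (iota 1), (iota 2), (iota 3); do !split; apply: D.
case: (pselect (x = iota 1)) => [->|x1].
  by exists (iota 0), (iota 2), (iota 3); do !split; apply: D.
case: (pselect (x = iota 2)) => [->|x2].
  by exists (iota 0), (iota 1), (iota 3); do !split; apply: D.
by exists (iota 0), (iota 1), (iota 2); do !split => //; apply: D.
Qed.

Lemma nleaf_x X (lt : X -> X -> Prop) (iota : nat -> X) : well_order lt -> injective iota ->
  forall x, ~ leaf (inl x : VH lt).
Proof.
move=> wo ii x; have [w1 [w2 [w3 [xw1 xw2 _ [w12 _ _]]]]] := three_others ii x.
have [e1 [t1 [a1 p1]]] := nb wo xw1.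
have [e2 [t2 [a2 p2]]] := nb wo xw2.
by apply: (two_nleaf a1 a2) => /(nb_inj xw1 p1 p2).
Qed.

Definition isX X (lt : X -> X -> Prop) (a : VH lt) :=
  (~ exists l, adjH a l /\ leaf l) /\
  exists b c d, [/\ adjH a b, adjH a c, adjH a d & [/\ b <> c, c <> d & b <> d]].

Definition path3 X (lt : X -> X -> Prop) (a b : VH lt) :=
  exists c d, [/\ adjH a c, adjH c d, adjH d b & exists l, adjH d l /\ leaf l].

Definition isaut X (lt : X -> X -> Prop) (f g : VH lt -> VH lt) :=
  [/\ cancel f g, cancel g f & forall a b, adjH a b <-> adjH (f a) (f b)].

Lemma isaut_sym X (lt : X -> X -> Prop) f g : isaut f g -> isaut (lt := lt) g f.
Proof.
case=> fg gf fA; split => // a b; split => H.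
  by apply: (iffRL (fA _ _)); rewrite !gf.
by move/(iffLR (fA _ _)): H; rewrite !gf.
Qed.

Lemma aut_leaf X (lt : X -> X -> Prop) f g (a : VH lt) : isaut f g -> leaf a -> leaf (f a).
Proof.
case=> fg gf fA [n [an H]]; exists (f n); split; first exact: (iffLR (fA _ _) an).
move=> m am; have : adjH a (g m) by apply: (iffRL (fA _ _)); rewrite gf.
by move/H => <-; rewrite gf.
Qed.

Lemma aut_isX X (lt : X -> X -> Prop) f g (a : VH lt) : isaut f g -> isX a -> isX (f a).
Proof.
move=> fa; have [fg gf fA] := fa; case=> nl [b [c [d [ab ac ad [bc cd bd]]]]]; split.
  move=> [l [al ll]]; apply: nl; exists (g l); split.
    by apply: (iffRL (fA _ _)); rewrite gf.
  exact: aut_leaf (isaut_sym fa) ll.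
exists (f b), (f c), (f d); split; try by apply: (iffLR (fA _ _)).
by split => /(can_inj fg).
Qed.

Lemma aut_path3 X (lt : X -> X -> Prop) f g (a b : VH lt) : isaut f g -> path3 a b -> path3 (f a) (f b).
Proof.
move=> fa; have [fg gf fA] := fa; case=> c [d [ac cd db [l [dl ll]]]].
exists (f c), (f d); split; try by apply: (iffLR (fA _ _)).
by exists (f l); split; [apply: (iffLR (fA _ _)) | apply: aut_leaf fa ll].
Qed.

Lemma isX_x X (lt : X -> X -> Prop) (iota : nat -> X) : well_order lt -> injective iota ->
  forall x, isX (inl x : VH lt).
Proof.
move=> wo ii x; split.
  move=> [l [al ll]]; have [e [[El _]|[El _]]] := nbr_x al; rewrite El in ll.
    exact: nleaf_u ll.
  exact: nleaf_v ll.
have [w1 [w2 [w3 [xw1 xw2 xw3 [w12 w23 w13]]]]] := three_others ii x.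
have [e1 [t1 [a1 p1]]] := nb wo xw1.
have [e2 [t2 [a2 p2]]] := nb wo xw2.
have [e3 [t3 [a3 p3]]] := nb wo xw3.
exists (inr (e1,t1)), (inr (e2,t2)), (inr (e3,t3)); split => //; split.
- by move=> /(nb_inj xw1 p1 p2).
- by move=> /(nb_inj xw2 p2 p3).
- by move=> /(nb_inj xw1 p1 p3).
Qed.

Lemma nisX_e X (lt : X -> X -> Prop) e t : ~ isX (inr (e,t) : VH lt).
Proof.
case: t => -[nl [b [c [d [ab ac ad [bc cd bd]]]]]].
- by case: (nbr_u ab) => Eb; case: (nbr_u ac) => Ec; case: (nbr_u ad) => Ed; subst.
- by apply: nl; exists (inr (e,TW)); split; [apply: adj_vw | apply: leaf_w].
- by move: (nbr_w ab) (nbr_w ac) => Eb Ec; subst.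
Qed.

Lemma path3_lt X (lt : X -> X -> Prop) (iota : nat -> X) : well_order lt -> injective iota ->
  forall x y, path3 (inl x : VH lt) (inl y) <-> lt x y.
Proof.
move=> wo ii x y; split.
  case=> c [d [ac cd db [l [dl ll]]]].
  have [e [[Ec ex]|[Ec ex]]] := nbr_x ac; subst c.
    case: (nbr_u cd) => Ed; subst d.
      by have [e' [[]|[]]] := nbr_x (adj_sym db).
    case: (nbr_v db) => // -[Ey].
    by rewrite Ey -ex; exact: (proj2_sig e).
  case: (nbr_v cd) => Ed; subst d.
  - case: (nbr_u dl) => El; subst l.
      by case: (nleaf_x wo ii ll).
    by case: (nleaf_v ll).
  - by have [e' [[]|[]]] := nbr_x (adj_sym db).
  - by have := nbr_w db.
move=> xy; pose e : edgeG lt := exist _ (x,y) xy.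
exists (inr (e,TU)), (inr (e,TV)); split.
- exact: (adj_xu e).
- exact: adj_uv.
- exact: (adj_vy e).
- by exists (inr (e,TW)); split; [apply: adj_vw | apply: leaf_w].
Qed.

Lemma edge_eq X (lt : X -> X -> Prop) (e e' : edgeG lt) :
  (sval e).1 = (sval e').1 -> (sval e).2 = (sval e').2 -> e = e'.
Proof. by case: e e' => [[a b] H] [[a' b'] H'] /= E1 E2; apply: eq_exist; rewrite E1 E2. Qed.

Lemma rigid X (lt : X -> X -> Prop) (iota : nat -> X) : well_order lt -> injective iota ->
  trivial_aut lt.
Proof.
move=> wo ii f [g fg gf] fA.
have fa : isaut f g by split.
have ga := isaut_sym fa.
have gA := let: And3 _ _ h := ga in h.
have toX (h k : VH lt -> VH lt) : isaut h k -> forall x, exists y, h (inl x) = inl y.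
  move=> ha x; have := aut_isX ha (isX_x wo ii x).
  by case: (h (inl x)) => [y|[e t]] H; [exists y | case: (nisX_e H)].
have /choice [phi phiP] := toX _ _ fa.
have /choice [psi psiP] := toX _ _ ga.
have psiphi x : psi (phi x) = x.
  by have := fg (inl x); rewrite phiP psiP => -[].
have mono (h k : VH lt -> VH lt) (p : X -> X) : isaut h k -> (forall x, h (inl x) = inl (p x)) ->
    forall x y, lt x y -> lt (p x) (p y).
  move=> ha hp x y xy; apply/(path3_lt wo ii); rewrite -!hp.
  by apply: aut_path3 ha _; apply/(path3_lt wo ii).
have noinc (p : X -> X) : (forall x y, lt x y -> lt (p x) (p y)) -> forall x, ~ lt (p x) x.
  case: (wo) => _ _ _ wf pm x; elim/(well_founded_ind wf): x => x IH H.
  exact: (IH _ H (pm _ _ H)).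
have phix x : phi x = x.
  case: (wo) => _ _ tri _; case: (tri (phi x) x) => [//|[H|H]]; exfalso.
    exact: (noinc phi (mono f g phi fa phiP) x).
  by apply: (noinc psi (mono g f psi ga psiP) (phi x)); rewrite psiphi.
have fx x : f (inl x) = inl x by rewrite phiP phix.
have fu e : f (inr (e,TU)) = inr (e,TU) /\ f (inr (e,TV)) = inr (e,TV).
  have a1 := iffLR (fA _ _) (adj_xu e); rewrite fx in a1.
  have [e' [[Eu e1]|[Eu e2]]] := nbr_x a1; last first.
    exfalso.
    have a2 : adjH (f (inr (e,TU))) (inr (e',TW)) by rewrite Eu; apply: adj_vw.
    have := iffLR (gA _ _) a2; rewrite fg => /nbr_u [El|El].
      by apply: (nleaf_x wo ii (x := (sval e).1)); rewrite -El; apply: aut_leaf ga (leaf_w _).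
    by apply: (nleaf_v (e := e)); rewrite -El; apply: aut_leaf ga (leaf_w _).
  have a2 := iffLR (fA _ _) (adj_uv e); rewrite Eu in a2.
  case: (nbr_u a2) => Ev.
    by move: Ev; rewrite -fx => /(can_inj fg).
  have a3 := iffLR (fA _ _) (adj_vy e); rewrite Ev fx in a3.
  case: (nbr_v a3) => // -[e2v].
  have ee : e' = e by apply: edge_eq; [exact: e1 | exact: esym e2v].
  by rewrite Eu Ev ee.
have fw e : f (inr (e,TW)) = inr (e,TW).
  have a := iffLR (fA _ _) (adj_vw e); rewrite (fu e).2 in a.
  case: (nbr_v a) => // E.
    by move: E; rewrite -(fu e).1 => /(can_inj fg).
  by move: E; rewrite -fx => /(can_inj fg).
apply: funext => -[x|[e []]] /=; [exact: fx | exact: (fu e).1 | exact: (fu e).2 | exact: fw].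
Qed.

Local Open Scope ring_scope.
Local Open Scope classical_set_scope.

Lemma adj_irr X (lt : X -> X -> Prop) (a : VH lt) : ~ adjH a a.
Proof. by case: a => [x|[e []]]; rewrite /adjH /=; tauto. Qed.

Lemma adjH_sym X (lt : X -> X -> Prop) (a b : VH lt) : adjH a b -> adjH b a.
Proof. by rewrite /adjH => -[]; auto. Qed.

Lemma dH0 (R : realType) X (lt : X -> X -> Prop) (eps : R) a : dH lt eps a a = 0.
Proof. by rewrite /dH asboolT. Qed.

Lemma dH1 (R : realType) X (lt : X -> X -> Prop) (eps : R) a b :
  a <> b -> adjH a b -> dH lt eps a b = 1.
Proof. by move=> ab adj; rewrite /dH asboolF // asboolT. Qed.

Lemma dH2 (R : realType) X (lt : X -> X -> Prop) (eps : R) a b :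
  a <> b -> ~ adjH a b -> dH lt eps a b = 1 + eps.
Proof. by move=> ab adj; rewrite /dH !asboolF. Qed.

Lemma dH_spec (R : realType) X (lt : X -> X -> Prop) (eps : R) a b :
  a <> b -> (adjH a b /\ dH lt eps a b = 1) \/ (~ adjH a b /\ dH lt eps a b = 1 + eps).
Proof.
move=> ab; case: (pselect (adjH a b)) => H; [left|right]; split => //.
  exact: dH1. exact: dH2.
Qed.

Lemma dH_sym (R : realType) X (lt : X -> X -> Prop) (eps : R) a b :
  dH lt eps a b = dH lt eps b a.
Proof.
case: (pselect (a = b)) => [->//|ab].
have ba : b <> a by move=> E; apply: ab.
case: (pselect (adjH a b)) => H.
  by rewrite !dH1 //; apply: adjH_sym.
by rewrite !dH2 // => /adjH_sym.
Qed.

Lemma dH_ge0 (R : realType) X (lt : X -> X -> Prop) (eps : R) a b :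
  0 <= eps -> 0 <= dH lt eps a b.
Proof.
move=> e0; case: (pselect (a = b)) => [->|ab]; first by rewrite dH0.
by case: (dH_spec eps ab) => -[_ ->]; lra.
Qed.

Lemma dH_metric (R : realType) X (lt : X -> X -> Prop) (eps : R) :
  0 < eps < 1 -> is_metric (dH lt eps).
Proof.
move=> /andP[e0 e1]; split; [|split].
- move=> a b; split => [|->]; last exact: dH0.
  case: (pselect (a = b)) => [//|ab] H; exfalso; move: H.
  by case: (dH_spec eps ab) => -[_ ->]; lra.
- exact: dH_sym.
- move=> a b c.
  case: (pselect (a = c)) => [->|ac].
    by rewrite dH0; apply: addr_ge0; apply: dH_ge0; lra.
  case: (pselect (a = b)) => [<-|ab]; first by rewrite dH0; lra.
  case: (pselect (b = c)) => [->|bc]; first by rewrite dH0; lra.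
  by case: (dH_spec eps ac) => -[_ ->]; case: (dH_spec eps ab) => -[_ ->];
    case: (dH_spec eps bc) => -[_ ->]; lra.
Qed.

Definition swap T (a b : T) (z : T) := if `[< z = a >] then b else if `[< z = b >] then a else z.

Lemma swap_a T (a b : T) : swap a b a = b.
Proof. by rewrite /swap asboolT. Qed.
Lemma swap_b T (a b : T) : a <> b -> swap a b b = a.
Proof. by move=> ab; rewrite /swap asboolF ?asboolT //; move=> E; apply: ab. Qed.
Lemma swap_o T (a b z : T) : z <> a -> z <> b -> swap a b z = z.
Proof. by move=> za zb; rewrite /swap !asboolF. Qed.

Lemma swapK T (a b : T) : a <> b -> cancel (swap a b) (swap a b).
Proof.
move=> ab z.
case: (pselect (z = a)) => [->|za]; first by rewrite swap_a swap_b.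
case: (pselect (z = b)) => [->|zb]; first by rewrite swap_b // swap_a.
by rewrite !swap_o.
Qed.

Lemma swap_nid T (a b : T) : a <> b -> swap a b <> id.
Proof. by move=> ab E; apply: ab; move: (congr1 (fun f => f a) E); rewrite /= swap_a => ->. Qed.

Lemma noadj_xv X (lt : X -> X -> Prop) (e : edgeG lt) : (forall x, ~ lt x x) ->
  ~ adjH (inl (sval e).1 : VH lt) (inr (e,TV)).
Proof.
move=> irr; rewrite /adjH /= => -[//|E]; apply: (irr (sval e).1).
by rewrite {2}E; exact: (proj2_sig e).
Qed.

Lemma s_val (R : realType) X (lt : X -> X -> Prop) (e : edgeG lt) (eps : R) :
  0 < eps -> s_inv (dH lt eps) = 1%:E.
Proof.
move=> e0; rewrite /s_inv; apply/le_anti/andP; split.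
  apply: ereal_inf_lbound; exists (inl (sval e).1), (inr (e,TU)); split => //.
  by rewrite dH1 //; left.
apply: le_ereal_inf_tmp => r [x [x' [xx' ->]]]; rewrite lee_fin.
by case: (dH_spec eps xx') => -[_ ->]; lra.
Qed.

Lemma t_val (R : realType) X (lt : X -> X -> Prop) (e : edgeG lt) (eps : R) :
  (forall x, ~ lt x x) -> 0 < eps -> t_inv (dH lt eps) = (1 - eps)%:E.
Proof.
move=> irr e0; rewrite /t_inv; apply/le_anti/andP; split.
  apply: ereal_inf_lbound; exists (inl (sval e).1), (inr (e,TU)), (inr (e,TV)); split => //.
  rewrite dH1 //; last by left.
  rewrite dH1 //; last by left.
  rewrite dH2 //; last exact: noadj_xv.
  congr (_%:E); lra.
apply: le_ereal_inf_tmp => r [x [x' [x'' [xx' x'x'' xx'' ->]]]]; rewrite lee_fin.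
by case: (dH_spec eps xx') => -[_ ->]; case: (dH_spec eps x'x'') => -[_ ->];
  case: (dH_spec eps xx'') => -[_ ->]; lra.
Qed.

Lemma dis_val (R : realType) X (lt : X -> X -> Prop) (eps : R) (f : VH lt -> VH lt) :
  0 < eps -> trivial_aut lt -> bijective f -> f <> id -> dis (dH lt eps) f = eps%:E.
Proof.
move=> e0 triv fb fid; rewrite /dis; apply/le_anti/andP; split.
  apply: ge_ereal_sup => r [x [x' ->]]; rewrite lee_fin.
  case: (pselect (x = x')) => [->|xx']; first by rewrite !dH0 subrr normr0; lra.
  have fxx' : f x <> f x' by move/(bij_inj fb).
  rewrite ler_norml; apply/andP.
  by case: (dH_spec eps xx') => -[_ ->]; case: (dH_spec eps fxx') => -[_ ->]; split; lra.
have [a [b nab]] : exists a b, ~ (adjH a b <-> adjH (f a) (f b)).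
  case: (pselect (exists a b, ~ (adjH a b <-> adjH (f a) (f b)))) => // nex.
  exfalso; apply: fid; apply: triv => // a b.
  case: (pselect (adjH a b <-> adjH (f a) (f b))) => // H.
  by exfalso; apply: nex; exists a, b.
have ab : a <> b.
  move=> E; apply: nab; rewrite E; split => /adj_irr //.
have fab : f a <> f b by move/(bij_inj fb).
apply: le_ereal_sup_tmp; exists (`|dH lt eps a b - dH lt eps (f a) (f b)|%:E); first by exists a, b.
rewrite lee_fin ler_normr; apply/orP.
case: (dH_spec eps ab) => -[H1 ->]; case: (dH_spec eps fab) => -[H2 ->].
- by exfalso; apply: nab; split.
- by right; lra.
- by left; lra.
- by exfalso; apply: nab; split.
Qed.

Lemma e_val (R : realType) X (lt : X -> X -> Prop) (e : edgeG lt) (eps : R) :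
  0 < eps -> trivial_aut lt -> e_inv (dH lt eps) = eps%:E.
Proof.
move=> e0 triv; rewrite /e_inv; apply/le_anti/andP; split.
  have ab : (inl (sval e).1 : VH lt) <> inr (e,TU) by [].
  apply: ereal_inf_lbound; exists (swap (inl (sval e).1 : VH lt) (inr (e,TU))); split.
  - by exists (swap (inl (sval e).1 : VH lt) (inr (e,TU))); apply: swapK.
  - exact: swap_nid.
  - by rewrite dis_val //; [exists (swap (inl (sval e).1 : VH lt) (inr (e,TU))); apply: swapK | exact: swap_nid].
apply: le_ereal_inf_tmp => r [f [fb fid ->]].
by rewrite dis_val.
Qed.

Local Open Scope classical_set_scope.
Local Open Scope card_scope.

Lemma inj_le T U (f : T -> U) : injective f -> [set: T] #<= [set: U].
Proof.
move=> fi; have : $|{injfun [set: T] >-> [set: U]}|.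
  by apply/injfunPex; exists f => // x y _ _; apply: fi.
by case=> F; exact: inj_card_le F.
Qed.

Lemma iota_ex (X : pointedType) : infinite_set [set: X] -> exists iota : nat -> X, injective iota.
Proof.
move=> Xinf; have /pcard_injP [f finj] := iffLR (infiniteP _) Xinf.
by exists f => x y E; apply: finj => //; apply/mem_set.
Qed.

Definition tagn (t : tag3) : nat := match t with TU => 0 | TV => 1 | TW => 2 end%N.

Lemma VH_card (X : pointedType) (lt : X -> X -> Prop) : infinite_set [set: X] ->
  [set: VH lt] #= [set: X].
Proof.
move=> Xinf; have [iota ii] := iota_ex Xinf; have [f2 f2i] := hess Xinf.
rewrite card_eq_le; apply/andP; split; last first.
  apply: (@inj_le _ _ inl).
  by move=> x y [->].
pose enc (v : VH lt) : X * X := match v with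
  | inl x => (x, iota 3%N) | inr (e,t) => (f2 (sval e), iota (tagn t)) end.
apply: (@inj_le _ _ (fun v => f2 (enc v))) => v w /f2i.
case: v => [x|[e t]]; case: w => [y|[e' t']] E;
  move: (congr1 fst E) (congr1 snd E) => /= E1 /ii E2 {E} //.
- by rewrite E1.
- by case: t' E2.
- by case: t E2.
- have ee : e = e'.
    case: e e' E1 => [p H] [p' H'] /= /f2i E; exact: eq_exist.
  by rewrite ee; case: t t' E2 => -[].
Qed.

Lemma wo_ex (T : pointedType) : exists lt : T -> T -> Prop, well_order lt.
Proof.
have [R Rwo] := wochoice.well_ordering_principle T.
have min3 x y z : exists m, (m == x) || (m == y) || (m == z) /\
    R m x /\ R m y /\ R m z.
  have [|m [[Am lbm] _]] := Rwo [pred w | (w == x) || (w == y) || (w == z)].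
    by exists x; rewrite inE eqxx.
  exists m; split; first by move: Am; rewrite inE.
  by split; [|split]; apply: lbm; rewrite inE eqxx ?orbT.
have Rxx x : R x x.
  by have [m [/orP[/orP[]|] /eqP -> [? _]]] := min3 x x x.
have anti x y : R x y -> R y x -> x = y.
  move=> xy yx.
  have [|m [_ U]] := Rwo [pred w | (w == x) || (w == y)].
    by exists x; rewrite inE eqxx.
  have mx : wochoice.minimum_of R [pred w | (w == x) || (w == y)] x.
    split; first by rewrite inE eqxx.
    by move=> w; rewrite inE => /orP[] /eqP ->.
  have my : wochoice.minimum_of R [pred w | (w == x) || (w == y)] y.
    split; first by rewrite inE eqxx orbT.
    by move=> w; rewrite inE => /orP[] /eqP ->.
  by rewrite -(U _ mx) -(U _ my).
have tot x y : R x y \/ R y x.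
  have [m [/orP[/orP[]|] /eqP -> [? [? ?]]]] := min3 x y y; auto.
have trans x y z : R x y -> R y z -> R x z.
  move=> xy yz; have [m [/orP[/orP[]|] /eqP -> [mx [my mz]]]] := min3 x y z => //.
    by rewrite (anti _ _ xy mx).
  by rewrite -(anti _ _ yz my).
exists (fun x y => R x y /\ x <> y); split.
- by move=> x [].
- move=> x y z [xy nxy] [yz nyz]; split; first exact: trans xy yz.
  by move=> E; apply: nxy; apply: anti => //; rewrite E.
- move=> x y; case: (pselect (x = y)) => [->|nxy]; first by left.
  by right; case: (tot x y) => H; [left|right]; split => // E; apply: nxy.
- move=> x; apply: contrapT => nacc.
  have [|m [[Am lbm] _]] := Rwo [pred w | ~~ `[< Acc (fun x y => R x y /\ x <> y) w >]].
    by exists x; rewrite inE; apply/asboolPn.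
  move: Am; rewrite inE => /asboolPn; apply; constructor => y [ym nym].
  apply: contrapT => nay; apply: nym; apply: anti => //.
  by apply: lbm; rewrite inE; apply/asboolPn.
Qed.

Unset Implicit Arguments. Set Strict Implicit.
Local Open Scope ring_scope.
Local Open Scope classical_set_scope.
Local Open Scope card_scope.

Theorem mainTheorem19 (R : realType) (X : Type) :
  infinite_set [set: X] ->
  (exists (M : Type) (d : M -> M -> R),
      [/\ is_metric d, generic d & [set: M] #= [set: X]]) /\
  (forall lt : X -> X -> Prop, well_order lt ->
     [/\ trivial_aut lt,
         [set: VH lt] #= [set: X]
       & forall eps : R, 0 < eps < 1 ->
           [/\ is_metric (dH lt eps), generic (dH lt eps),
               s_inv (dH lt eps) = 1%:E,
               t_inv (dH lt eps) = (1 - eps)%:E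
             & e_inv (dH lt eps) = eps%:E]]).
Proof.
elim/Ppointed: X => X Xinf.
  exfalso; apply: Xinf; rewrite (empty_eq0 [set: X]); exact: finite_set0.
have [iota ii] := iota_ex Xinf.
have part2 : forall lt : X -> X -> Prop, well_order lt ->
     [/\ trivial_aut lt,
         [set: VH lt] #= [set: X]
       & forall eps : R, 0 < eps < 1 ->
           [/\ is_metric (dH lt eps), generic (dH lt eps),
               s_inv (dH lt eps) = 1%:E,
               t_inv (dH lt eps) = (1 - eps)%:E
             & e_inv (dH lt eps) = eps%:E]].
  move=> lt wo; have [irr _ tri _] := wo.
  have triv := rigid wo ii.
  have [e0 _] : exists e : edgeG lt, True.
    have : iota 0%N <> iota 1%N by move/ii.
    case: (tri (iota 0%N) (iota 1%N)) => [//|[H|H]] _.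
      by exists (exist (fun p => lt p.1 p.2) (iota 0%N, iota 1%N) H).
    by exists (exist (fun p => lt p.1 p.2) (iota 1%N, iota 0%N) H).
  split => //; first exact: VH_card.
  move=> eps epsH; have /andP [ep0 ep1] := epsH.
  have sv := s_val e0 ep0; have tv := t_val e0 irr ep0; have ev := e_val e0 ep0 triv.
  split => //; first exact: dH_metric.
  split; last by rewrite ev lte_fin.
  - exists (inl (sval e0).1), (inr (e0,TU)), (inr (e0,TV)); split => //.
  - by rewrite sv lte_fin.
  - by rewrite tv lte_fin; lra.
split; last exact: part2.
have [lt wo] := wo_ex X.
have [_ card H] := part2 lt wo.
have h : ((0:R) < 1/2) && (1/2 < (1:R)) by apply/andP; split; lra.
have [met gen _ _ _] := H _ h.
by exists (VH lt), (dH lt (1/2)); split.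
Qed.
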